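(* Let $\lambda\in P$ and integers $a\ge2$, $b\ge1$, $d\ge1$, $m\ge1$. (i) If $\lambda$ has a neighborhood of type $(a+d,b)$, then $\lambda$ has $d+1$ neighborhoods of type $(a,b)$. (ii) If $\lambda$ has a neighborhood of type $(m(a-1)+1,mb)$, then $\lambda$ has a neighborhood of type $(a,b)$.
   Context: Let $P=\mathbb Z^n$. For $\lambda\in P$, $\rho(\lambda)$ is the unique permutation of $(\frac{n-1}2,\frac{n-3}2,\dots,-\frac{n-1}2)$ with $\rho(\lambda)_i>\rho(\lambda)_j$ iff $\lambda_i>\lambda_j$ or ($\lambda_i=\lambda_j$ and $i<j$). For integers $a\ge2,b\ge1$, an ordered pair $(i,j)$ of indices is a neighborhood of type $(a,b)$ in $\lambda$ if $\rho(\lambda)_i-\rho(\lambda)_j=a-1$ and either $\lambda_i-\lambda_j\le b-1$, or $\lambda_i-\lambda_j=b$ and $j<i$. (Distinct pairs count as distinct neighborhoods.) *)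

(* Defs.v *)
From mathcomp Require Import all_boot all_order all_algebra.
Set Implicit Arguments. Unset Strict Implicit. Unset Printing Implicit Defensive.
Import Order.TTheory GRing.Theory Num.Theory.
Local Open Scope ring_scope.

(* Weights: lambda in P = Z^n is a function 'I_n -> int. *)

Definition rho_rank (n : nat) (lam : 'I_n -> int) (i : 'I_n) : nat :=
  #|[set j : 'I_n | (lam i < lam j) || ((lam j == lam i) && (j < i)%N)]|.

(* rho(lambda)_i : the entry of ((n-1)/2, (n-3)/2, ..., -(n-1)/2) placed at i,
   i.e. (n-1)/2 - rank_i, so that rho_i > rho_j iff
   lambda_i > lambda_j or (lambda_i = lambda_j and i < j). *)
Definition rho (n : nat) (lam : 'I_n -> int) (i : 'I_n) : rat :=
  ((n%:R - 1) / 2%:R) - (rho_rank lam i)%:R.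

Definition is_nbhd (n : nat) (lam : 'I_n -> int) (a b : int) (i j : 'I_n) : bool :=
  (rho lam i - rho lam j == (a - 1)%:~R) &&
  ((lam i - lam j <= b - 1) || ((lam i - lam j == b) && (j < i)%N)).

Definition nbhds (n : nat) (lam : 'I_n -> int) (a b : int) : {set 'I_n * 'I_n} :=
  [set p : 'I_n * 'I_n | is_nbhd lam a b p.1 p.2].

(* Main.v *)
Require Import Defs.
From mathcomp Require Import all_boot all_order all_algebra.
From mathcomp Require Import zify ring lra.
Set Implicit Arguments. Unset Strict Implicit.
Import Order.TTheory GRing.Theory Num.Theory.
Local Open Scope ring_scope.

Section S.
Variables (n : nat) (lam : 'I_n -> int).

Definition E (i : 'I_n) : int := lam i * n%:Z - (i : nat)%:Z.

Lemma rel_E i j : ((lam i < lam j) || ((lam j == lam i) && (j < i)%N)) = (E i < E j).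
Proof.
rewrite /E; have hi := ltn_ord i; have hj := ltn_ord j.
case: (ltrgtP (lam i) (lam j)) => h /=.
- symmetry; apply/idP. nia.
- symmetry; apply/negbTE; rewrite -leNgt. nia.
- rewrite h; apply/idP/idP; lia.
Qed.

Lemma E_inj : injective E.
Proof.
move=> i j h.
case: (ltrgtP (lam i) (lam j)) => hl.
- have := rel_E i j; rewrite hl h ltxx //.
- have := rel_E j i; rewrite hl h ltxx //.
- apply/val_inj; move: h; rewrite /E hl => h. move/eqP: h; rewrite (inj_eq (addrI _)) (inj_eq oppr_inj) => /eqP [] /eqP hh; exact/eqP.
Qed.

Definition r i := rho_rank lam i.

Lemma r_E i : r i = #|[set j | (E i < E j)%R]|.
Proof. by apply: eq_card => j; rewrite !inE rel_E. Qed.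

Lemma r_lt i : (r i < n)%N.
Proof.
rewrite r_E -[X in (_ < X)%N](card_ord n).
apply: proper_card; apply/properP; split; first by apply/subsetP.
by exists i; rewrite ?inE ?ltxx.
Qed.

Lemma mono i j : E i < E j -> (r j < r i)%N.
Proof.
move=> h; rewrite !r_E; apply: proper_card; apply/properP; split.
  by apply/subsetP => k; rewrite !inE => /(lt_trans h).
by exists j; rewrite !inE ?ltxx ?h.
Qed.

Lemma wmono i j : (r i <= r j)%N -> E j <= E i.
Proof. by move=> h; rewrite leNgt; apply/negP => /mono; rewrite ltnNge h. Qed.

Lemma r_inj i j : r i = r j -> i = j.
Proof.
move=> h; case: (ltrgtP (E i) (E j)) => hE.
- by move: (mono hE); rewrite h ltnn.
- by move: (mono hE); rewrite h ltnn.
- exact: E_inj.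
Qed.

Lemma r_onto k : (k < n)%N -> exists i, r i = k.
Proof.
move=> hk.
pose f (i : 'I_n) : 'I_n := Ordinal (r_lt i).
have finj : injective f by move=> x y /(congr1 val) /= /r_inj.
have /codomP [x hx] := injF_onto finj (Ordinal hk).
by exists x; move/(congr1 val): hx.
Qed.

Lemma rho_diff i j : rho lam i - rho lam j = ((r j)%:Z - (r i)%:Z)%:~R :> rat.
Proof. rewrite /rho intrB -!pmulrn; rewrite /r; ring. Qed.

Lemma nbhdE a b i j : is_nbhd lam a b i j =
  ((r j)%:Z - (r i)%:Z == a - 1) && (E i < E j + b * n%:Z).
Proof.
rewrite /is_nbhd rho_diff eqr_int; congr (_ && _).
rewrite /E; have hi := ltn_ord i; have hj := ltn_ord j.
case: (ltrgtP (lam i - lam j) b) => h /=.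
- have -> : lam i - lam j <= b - 1 by lia.
  have hh : lam i * n%:Z - (i:nat)%:Z < lam j * n%:Z - (j:nat)%:Z + b * n%:Z by nia.
  by rewrite hh.
- have -> : lam i - lam j <= b - 1 = false by lia.
  rewrite /=.
  have hh : lam j * n%:Z - (j:nat)%:Z + b * n%:Z <= lam i * n%:Z - (i:nat)%:Z by nia.
  by rewrite ltNge hh.
- have -> : lam i - lam j <= b - 1 = false by lia.
  rewrite /=.
  have -> : lam i = lam j + b by lia.
  apply/idP/idP; lia.
Qed.
End S.

Theorem lemma4p2 (n : nat) (lam : 'I_n -> int) (a b d m : int) :
  2 <= a -> 1 <= b -> 1 <= d -> 1 <= m ->
  ((nbhds lam (a + d) b != set0) ->
     (`|d|%N.+1 <= #|nbhds lam a b|)%N) /\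
  ((nbhds lam (m * (a - 1) + 1) (m * b) != set0) ->
     (nbhds lam a b != set0)).
Proof.
move=> ha hb hd hm.
pose A := `|a - 1|%N.
have eA : a - 1 = A%:Z by rewrite /A gez0_abs //; lia.
have A0 : (0 < A)%N by lia.
pose s (i0 : 'I_n) (k : nat) : 'I_n :=
  if [pick x | r lam x == k] is Some x then x else i0.
have sP : forall i0 k, (k < n)%N -> r lam (s i0 k) = k.
  move=> i0 k hk; rewrite /s; case: pickP => [x /eqP //|].
  by have [x hx] := r_onto lam hk => /(_ x); rewrite hx eqxx.
split.
- case/set0Pn => [[i j]]; rewrite inE nbhdE /= => /andP [/eqP h1 h2].
  pose D := `|d|%N.
  have eD : d = D%:Z by rewrite /D gez0_abs //; lia.
  have hj : (r lam j = r lam i + A + D)%N by lia.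
  have hjn := r_lt lam j.
  pose f (t : 'I_D.+1) := (s i (r lam i + t)%N, s i (r lam i + t + A)%N).
  have fi : injective f.
    move=> t1 t2; move: (ltn_ord t1) (ltn_ord t2) => l2 l1.
    case=> /(congr1 (r lam)); rewrite !sP; try lia.
    by move=> e _; apply: ord_inj; lia.
  apply: (@leq_trans #|f @: setT|); first by rewrite (card_imset _ fi) cardsT card_ord.
  apply: subset_leq_card; apply/subsetP => p /imsetP [t _ ->].
  have := ltn_ord t => lt.
  rewrite inE nbhdE /= !sP; try lia.
  apply/andP; split; first by apply/eqP; lia.
  have e1 : E lam (s i (r lam i + t)%N) <= E lam i by apply: wmono; rewrite sP; lia.
  have e2 : E lam j <= E lam (s i (r lam i + t + A)%N) by apply: wmono; rewrite sP; lia.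
  lia.
- case/set0Pn => [[i j]]; rewrite inE nbhdE /= => /andP [/eqP h1 h2].
  pose M := `|m|%N.
  have eM : m = M%:Z by rewrite /M gez0_abs //; lia.
  have hjn := r_lt lam j.
  have hj : (r lam j = r lam i + M * A)%N.
    have : (r lam j)%:Z = (r lam i)%:Z + M%:Z * A%:Z by rewrite -eA -eM; lia.
    by rewrite -PoszM -PoszD => [[]].
  apply/negP => /eqP h0.
  have nn : forall x y, ~~ is_nbhd lam a b x y.
    move=> x y; apply/negP => hx.
    have : (x, y) \in nbhds lam a b by rewrite inE.
    by rewrite h0 inE.
  pose p k := s i (r lam i + k * A)%N.
  have key : forall k, (k <= M)%N ->
      E lam (p k) + (k%:Z * b) * n%:Z <= E lam (p 0%N).
    elim => [|k IH] hk; first by rewrite mul0r mul0r addr0.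
    have hk1 : (k <= M)%N by lia.
    have hb1 : (r lam i + k.+1 * A <= r lam j)%N by rewrite hj leq_add2l leq_mul2r hk orbT.
    have := nn (p k) (p k.+1); rewrite nbhdE /p !sP; try lia.
    have -> : ((r lam i + k.+1 * A)%N%:Z - (r lam i + k * A)%N%:Z == a - 1).
      apply/eqP; rewrite eA mulSn; lia.
    rewrite /= -leNgt => hs.
    have := IH hk1; rewrite /p => IH'.
    have -> : (k.+1)%:Z * b * n%:Z = k%:Z * b * n%:Z + b * n%:Z.
      rewrite -addn1 PoszD; ring.
    lia.
  have := key M (leqnn M).
  have e1 : E lam (p 0%N) <= E lam i by apply: wmono; rewrite /p sP; lia.
  have e2 : E lam j <= E lam (p M) by apply: wmono; rewrite /p sP; lia.
  rewrite eM in h2.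
  lia.
Qed.
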